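(* Consider 2-Choices. For any opinion $i$ and any $t\ge1$, on the event $\alpha_{t-1}(i)\le\gamma_{t-1}$, the random variable $\alpha_t(i)-\alpha_{t-1}(i)$ conditioned on $\mathcal F_{t-1}$ satisfies the one-sided $\big(\frac1n,\frac{2\alpha_{t-1}(i)^2}{n}\big)$-Bernstein condition.
   Context: **Setting.** Let $V$ be a set of $n$ vertices and $k\in\{1,\dots,n\}$. A configuration is a map $\mathsf{opn}\colon V\to[k]$. **2-Choices.** This is a synchronous process. In each round $t\ge1$, each vertex $v$ independently samples $w_1,w_2\in V$ uniformly with replacement. It sets $\mathsf{opn}_t(v)=\mathsf{opn}_{t-1}(w_1)$ if $\mathsf{opn}_{t-1}(w_1)=\mathsf{opn}_{t-1}(w_2)$, and $\mathsf{opn}_t(v)=\mathsf{opn}_{t-1}(v)$ otherwise. **Basic quantities.** - $\alpha_t(i)=|\{v:\mathsf{opn}_t(v)=i\}|/n$. - $\gamma_t=\sum_i\alpha_t(i)^2$. - $\mathcal F_t$ is generated by $\mathsf{opn}_0,\dots,\mathsf{opn}_t$. **One-sided Bernstein condition.** $X$ satisfies the one-sided $(D,s)$-Bernstein condition if $\mathbb E[e^{\lambda X}]\le\exp\big(\frac{\lambda^2 s/2}{1-\lambda D/3}\big)$ for all $\lambda\ge0$ with $\lambda D<3$. Conditioned on $\mathcal F_{t-1}$, the expectation is replaced by the conditional expectation. *)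

(* Defs.v *)
From HB Require Import structures.
From mathcomp Require Import all_boot all_order all_algebra.
From mathcomp Require Import reals.
From mathcomp Require Import sequences exp.
Set Implicit Arguments. Unset Strict Implicit. Unset Printing Implicit Defensive.
Import Order.TTheory GRing.Theory Num.Theory.
Local Open Scope ring_scope.

Definition config (V : finType) (k : nat) := {ffun V -> 'I_k}.

Definition alpha (R : realType) (V : finType) (k : nat) (c : config V k) (i : 'I_k) : R :=
  #|[set v | c v == i]|%:R / #|V|%:R.

Definition gamma (R : realType) (V : finType) (k : nat) (c : config V k) : R :=
  \sum_(j < k) alpha R c j ^+ 2.

Definition two_choices_step (V : finType) (k : nat) (c : config V k)
  (s : {ffun V -> V * V}) : config V k :=
  [ffun v => if c (s v).1 == c (s v).2 then c (s v).1 else c v].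

(* Expectation of f(opn_t) conditioned on F_{t-1}, where opn_{t-1} = c: every
   vertex independently samples (w1,w2) uniformly from V*V, i.e. the sample
   function s : V -> V*V is uniform over all such functions. *)
Definition cond_exp_step (R : realType) (V : finType) (k : nat) (c : config V k)
  (f : config V k -> R) : R :=
  (\sum_(s : {ffun V -> V * V}) f (two_choices_step c s)) / #|{ffun V -> V * V}|%:R.

Definition one_sided_Bernstein (R : realType) (mgf : R -> R) (D s : R) : Prop :=
  forall lam : R, 0 <= lam -> lam * D < 3 ->
    mgf lam <= expR ((lam ^+ 2 * s / 2) / (1 - lam * D / 3)).

Definition cond_mgf_increment (R : realType) (V : finType) (k : nat)
  (c : config V k) (i : 'I_k) (lam : R) : R :=
  cond_exp_step c (fun c' => expR (lam * (alpha R c' i - alpha R c i))).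

(* Main.v *)
Require Import Defs.
From HB Require Import structures.
From mathcomp Require Import all_boot all_order all_algebra.
From mathcomp Require Import reals.
From mathcomp Require Import sequences exp.
From mathcomp Require Import topology normedtype.
From mathcomp Require Import ring lra.
Import numFieldNormedType.Exports.
Import Order.TTheory GRing.Theory Num.Theory.
Local Open Scope ring_scope.

Lemma fact_ge (j : nat) : (2 * 3 ^ j <= (j.+2)`!)%N.
Proof.
elim: j => [|j IH]; first by [].
rewrite factS expnS mulnCA; apply: leq_mul => //.
Qed.

Lemma geom_le (R : realType) (r : R) (N : nat) : 0 <= r < 1 ->
  \sum_(k < N) r ^+ k <= (1 - r)^-1.
Proof.
move=> /andP[r0 r1]; have h : 0 < 1 - r by rewrite subr_gt0.
elim: N => [|N IH]; first by rewrite big_ord0 invr_ge0 ltW.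
rewrite big_ord_recl expr0.
under eq_bigr do rewrite exprS.
rewrite -mulr_sumr.
apply: (@le_trans _ _ (1 + r * (1 - r)^-1)); first by rewrite lerD2l ler_wpM2l.
by rewrite -[X in X + _ <= _](divff (lt0r_neq0 h)) -mulrDl subrK mul1r.
Qed.

Lemma cosh_le (R : realType) (m : R) : 0 <= m -> m < 3 ->
  expR m + expR (- m) - 2 <= m ^+ 2 / (1 - m / 3).
Proof.
move=> m0 m3.
have r01 : 0 <= m / 3 < 1.
  rewrite divr_ge0 //= ltr_pdivrMr //; lra.
have term j : (m ^+ j.+2 / (j.+2)`!%:R + (- m) ^+ j.+2 / (j.+2)`!%:R)
               <= m ^+ 2 * (m / 3) ^+ j.
  have hn : (- m) ^+ j.+2 <= m ^+ j.+2.
    apply: (le_trans (ler_norm _)).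
    by rewrite normrX normrN ger0_norm.
  rewrite -mulrDl.
  apply: (@le_trans _ _ ((m ^+ j.+2 + m ^+ j.+2) / (j.+2)`!%:R)).
    by apply: ler_wpM2r; [rewrite invr_ge0 ler0n | rewrite lerD2l].
  have -> : m ^+ j.+2 = m ^+ 2 * m ^+ j by rewrite -exprD.
  rewrite -mulrDr -mulrA ler_wpM2l ?exprn_ge0 // exprMn exprVn.
  have -> : m ^+ j + m ^+ j = m ^+ j * 2 by rewrite mulr_natr mulr2n.
  rewrite -mulrA ler_wpM2l ?exprn_ge0 //.
  rewrite ler_pdivrMr ?ltr0n ?fact_gt0 // mulrC ler_pdivlMr ?exprn_gt0 //.
  by rewrite -natrX -natrM ler_nat fact_ge.
have hpos : 0 <= m ^+ 2 / (1 - m / 3).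
  by rewrite divr_ge0 ?exprn_ge0 // subr_ge0 ltW //; case/andP: r01.
have part N : series (exp_coeff m) N + series (exp_coeff (- m)) N
              <= 2 + m ^+ 2 / (1 - m / 3).
  case: N => [|[|j]].
  - rewrite /series /= !big_geq // addr0; exact: addr_ge0.
  - rewrite /series /= !big_nat1 /exp_coeff /= !expr0 !divr1.
    by rewrite -[X in X <= _]addr0 lerD2l.
  - rewrite /series /= -big_split /= !big_nat_recl // /exp_coeff /=.
    set S := \sum_(0 <= i < j) _.
    have hS : S <= m ^+ 2 / (1 - m / 3).
      apply: (le_trans (ler_sum _ (fun i _ => term i))).
      by rewrite -mulr_sumr big_mkord ler_wpM2l ?exprn_ge0 // geom_le.
    rewrite (_ : 0`!%:R = 1 :> R) // !divr1.
    rewrite !expr0 !expr1; lra.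
have cm := is_cvg_series_exp_coeff m.
have cn := is_cvg_series_exp_coeff (- m).
have e : limn (fun N => series (exp_coeff m) N + series (exp_coeff (- m)) N) =
  limn (series (exp_coeff m)) + limn (series (exp_coeff (- m))).
  exact: limD.
rewrite /expR -e lerBlDl addrC.
apply: limr_le; first exact: is_cvgD.
by near=> N; rewrite addrC; apply: part.
Unshelve. all: by end_near.
Qed.

Section Main.
Variables (R : realType) (V : finType) (k : nat).

Lemma alpha_sum (c' : config V k) j :
  alpha R c' j = (\sum_v ((c' v == j)%:R : R)) / #|V|%:R.
Proof.
rewrite /alpha; congr (_ / _).
rewrite -sum1_card natr_sum big_mkcond /=; apply: eq_bigr => v _.
by rewrite inE; case: (c' v == j).
Qed.

Definition gstep (c : config V k) (i : 'I_k) (mu : R) (v : V) (w : V * V) : R :=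
  expR (mu * (((if c w.1 == c w.2 then c w.1 else c v) == i)%:R - (c v == i)%:R)).

Lemma mgf_prod (c : config V k) (i : 'I_k) (lam : R) :
  cond_mgf_increment c i lam =
  \prod_v ((\sum_(w : V * V) gstep c i (lam / #|V|%:R) v w) / #|{: V * V}|%:R).
Proof.
rewrite /cond_mgf_increment /cond_exp_step.
have -> : \sum_(s : {ffun V -> V * V})
     expR (lam * (alpha R (two_choices_step c s) i - alpha R c i)) =
   \sum_(s : {ffun V -> V * V}) \prod_v gstep c i (lam / #|V|%:R) v (s v).
  apply: eq_bigr => s _.
  rewrite !alpha_sum -mulrBl -sumrB mulrCA mulrC mulr_sumr expR_sum.
  apply: eq_bigr => v _; rewrite /gstep ffunE.
  by rewrite mulrAC.
rewrite prodf_div -bigA_distr_bigA; congr (_ / _).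
rewrite card_ffun natrX -prodr_const; by apply: eq_bigl => v.
Qed.

Lemma sumr1 (T : finType) : \sum_(t : T) (1 : R) = #|T|%:R.
Proof. by rewrite -sum1_card natr_sum; apply: eq_bigl. Qed.

Definition pP (c : config V k) (i : 'I_k) (w : V * V) :=
  (c w.1 == i) && (c w.2 == i).
Definition pQ (c : config V k) (i : 'I_k) (w : V * V) :=
  (c w.1 == c w.2) && (c w.1 != i).

Lemma gstep_eq c i mu v w :
  gstep c i mu v w = if c v == i then 1 + ((pQ c i w)%:R : R) * (expR (- mu) - 1)
                     else 1 + ((pP c i w)%:R : R) * (expR mu - 1).
Proof.
rewrite /gstep /pQ /pP.
case hv: (c v == i); case h12: (c w.1 == c w.2) => /=.
- case h1: (c w.1 == i) => /=.
  + by rewrite subrr mulr0 expR0 mul0r addr0.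
  + by rewrite sub0r mulrN1 mul1r addrC subrK.
- by rewrite hv subrr mulr0 expR0 mul0r addr0.
- rewrite -(eqP h12) andbb; case h1: (c w.1 == i) => /=.
  + by rewrite subr0 mulr1 mul1r addrC subrK.
  + by rewrite subrr mulr0 expR0 mul0r addr0.
- rewrite hv; case h1: (c w.1 == i); case h2: (c w.2 == i) => /=;
    try by rewrite subrr mulr0 expR0 mul0r addr0.
  by rewrite (eqP h1) (eqP h2) eqxx in h12.
Qed.

Lemma vertex_bound c i mu v (hV : (0 < #|V|)%N) :
  0 <= (\sum_w gstep c i mu v w) / #|{: V * V}|%:R <=
  expR (if c v == i then
          (\sum_w ((pQ c i w)%:R : R)) / #|{: V * V}|%:R * (expR (- mu) - 1)
        else (\sum_w ((pP c i w)%:R : R)) / #|{: V * V}|%:R * (expR mu - 1)).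
Proof.
have hM : (0 : R) < #|{: V * V}|%:R by rewrite ltr0n card_prod muln_gt0 hV.
apply/andP; split.
  by rewrite divr_ge0 ?ler0n // sumr_ge0 // => w _; exact: expR_ge0.
under eq_bigr do rewrite gstep_eq.
case: (c v == i) => /=; rewrite big_split /= sumr1 -mulr_suml mulrDl
  divff ?lt0r_neq0 // mulrAC; exact: expR_ge1Dx.
Qed.

Definition cnt (c : config V k) (j : 'I_k) : R := \sum_v ((c v == j)%:R : R).

Lemma sumP c i : \sum_(w : V * V) ((pP c i w)%:R : R) = cnt c i ^+ 2.
Proof.
rewrite expr2 /cnt big_distrlr /= pair_bigA /=.
apply: eq_bigr => w _; rewrite /pP.
by case: (c w.1 == i); case: (c w.2 == i); rewrite /= ?mul1r ?mul0r.
Qed.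

Lemma sumQ c i : \sum_(w : V * V) ((pQ c i w)%:R : R) =
  \sum_j cnt c j ^+ 2 - cnt c i ^+ 2.
Proof.
have e w : ((pQ c i w)%:R : R) = ((c w.1 == c w.2)%:R) - (pP c i w)%:R.
  rewrite /pQ /pP; case: (c w.1 =P c w.2) => [e|ne].
    by rewrite -e andbb; case: (c w.1 == i); rewrite /= ?subrr ?subr0.
  have -> : (c w.1 == i) && (c w.2 == i) = false.
    by apply/negP => /andP[/eqP a /eqP b]; apply: ne; rewrite a b.
  by rewrite /= subrr.
under eq_bigr do rewrite e.
rewrite sumrB sumP; congr (_ - _).
have -> : \sum_(w : V * V) ((c w.1 == c w.2)%:R : R) =
   \sum_a \sum_b ((c a == c b)%:R : R) by rewrite pair_bigA.
transitivity (\sum_j \sum_a \sum_b ((c a == j)%:R * (c b == j)%:R : R)).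
  rewrite [RHS]exchange_big; apply: eq_bigr => a _.
  rewrite [RHS]exchange_big; apply: eq_bigr => b _.
  rewrite (bigD1 (c a)) //= eqxx mul1r big1 ?addr0; first by rewrite eq_sym.
  by move=> j /negbTE hj; rewrite eq_sym hj mul0r.
by apply: eq_bigr => j _; rewrite expr2 /cnt big_distrlr.
Qed.

Lemma final_ineq (N x S K1 K2 B : R) : 0 < N -> 0 <= x -> x <= N ->
  x / N <= S / N ^+ 2 -> K1 <= 0 -> 0 <= K1 + K2 -> K1 + K2 <= B ->
  x * ((S - x ^+ 2) / N ^+ 2 * K1) + (N - x) * (x ^+ 2 / N ^+ 2 * K2)
    <= N * (x / N) ^+ 2 * B.
Proof.
move=> hN hx0 hxN hg hK1 hK12 hB.
have ha0 : 0 <= x / N by rewrite divr_ge0 // ltW.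
have ha1 : x / N <= 1 by rewrite ler_pdivrMr // mul1r.
have e1 : (S - x ^+ 2) / N ^+ 2 = S / N ^+ 2 - (x / N) ^+ 2.
  by rewrite mulrBl expr_div_n.
have e2 : x ^+ 2 / N ^+ 2 = (x / N) ^+ 2 by rewrite expr_div_n.
have ex : x = N * (x / N) by rewrite mulrC divfK // lt0r_neq0.
rewrite e1 e2.
move: hg ha0 ha1 e1 e2; set a := x / N; set g := S / N ^+ 2 => hg ha0 ha1 _ _.
rewrite [in X in X * (_ * _) + _]ex [in X in _ + (_ - X) * _]ex.
have key : a * ((g - a ^+ 2) * K1) + (1 - a) * (a ^+ 2 * K2) <= a ^+ 2 * B.
  have h1 : a * (g - a) * K1 <= 0.
    by apply: mulr_ge0_le0 => //; apply: mulr_ge0 => //; rewrite subr_ge0.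
  have h2 : 0 <= a ^+ 2 * a * (K1 + K2).
    by apply: mulr_ge0 => //; apply: mulr_ge0 => //; apply: exprn_ge0.
  have h3 : a ^+ 2 * (K1 + K2) <= a ^+ 2 * B by rewrite ler_wpM2l // exprn_ge0.
  have -> : a * ((g - a ^+ 2) * K1) + (1 - a) * (a ^+ 2 * K2) =
     a * (g - a) * K1 + a ^+ 2 * (K1 + K2) - a ^+ 2 * a * (K1 + K2) by ring.
  lra.
have -> : N * a * ((g - a ^+ 2) * K1) + (N - N * a) * (a ^+ 2 * K2) =
   N * (a * ((g - a ^+ 2) * K1) + (1 - a) * (a ^+ 2 * K2)) by ring.
by rewrite -mulrA ler_wpM2l // ltW.
Qed.

End Main.

Theorem lemma4p3 (R : realType) (V : finType) (k : nat)
  (hk1 : (1 <= k)%N) (hkn : (k <= #|V|)%N)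
  (c : config V k) (i : 'I_k)
  (hev : alpha R c i <= gamma R c) :
  one_sided_Bernstein (cond_mgf_increment c i)
    (1 / #|V|%:R) (2 * alpha R c i ^+ 2 / #|V|%:R).
Proof.
move=> lam hl hlD.
have hV : (0 < #|V|)%N by apply: leq_trans hkn.
have hN : (0 : R) < #|V|%:R by rewrite ltr0n.
rewrite mgf_prod.
set mu := lam / #|V|%:R.
have hmu0 : 0 <= mu by rewrite /mu divr_ge0 // ltW.
have hmu3 : mu < 3 by move: hlD; rewrite /mu mul1r.
apply: le_trans.
  by apply: ler_prod => v _; exact: (@vertex_bound R V k c i mu v hV).
rewrite -expR_sum ler_expR sumQ sumP.
have hM : (#|{: V * V}|%:R : R) = #|V|%:R ^+ 2 by rewrite card_prod natrM expr2.
rewrite hM.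
set A := (_ - _) / _ * _.
set Bp := _ / _ * (expR mu - 1).
have -> : \sum_v (if c v == i then A else Bp) =
    cnt R V k c i * A + (#|V|%:R - cnt R V k c i) * Bp.
  transitivity (\sum_v ((c v == i)%:R * A + (1 - (c v == i)%:R) * Bp)).
    by apply: eq_bigr => v _; case: (c v == i); rewrite /=; ring.
  by rewrite big_split /= -!mulr_suml sumrB sumr1.
have ha : alpha R c i = cnt R V k c i / #|V|%:R by rewrite alpha_sum.
have hg : gamma R c = (\sum_j cnt R V k c j ^+ 2) / #|V|%:R ^+ 2.
  rewrite /gamma; under eq_bigr do rewrite alpha_sum expr_div_n.
  by rewrite -mulr_suml.
have hden : 1 - lam * (1 / #|V|%:R) / 3 != 0.
  by apply: lt0r_neq0; rewrite subr_gt0 ltr_pdivrMr //; lra.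
have -> : lam ^+ 2 * (2 * alpha R c i ^+ 2 / #|V|%:R) / 2 /
  (1 - lam * (1 / #|V|%:R) / 3) =
  #|V|%:R * (cnt R V k c i / #|V|%:R) ^+ 2 * (mu ^+ 2 / (1 - mu / 3)).
  rewrite ha /mu; field.
  apply/andP; split; apply: lt0r_neq0 => //.
  by rewrite subr_gt0 -ltr_pdivrMl // mulrC.
rewrite /A /Bp; apply: final_ineq => //.
- by rewrite /cnt sumr_ge0 // => v _; rewrite ler0n.
- rewrite /cnt -sumr1; apply: ler_sum => v _.
  by case: (c v == i); rewrite /= ?ler01.
- by rewrite -ha -hg.
- by rewrite subr_le0 expR_le1 oppr_le0.
- have := expR_ge1Dx mu; have := expR_ge1Dx (- mu); lra.
- have := cosh_le R mu hmu0 hmu3; lra.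
Qed.
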